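(* For every $f\in L^{\infty}(\mathbb{R}_+)$, $\overline{M}_1(f)\le\overline{R}(f)$.
   Context: $L^{\infty}(\mathbb{R}_+)$: real-valued essentially bounded measurable functions on $[0,\infty)$. $\overline{M}_1(f)=\lim_{\theta\to\infty}\limsup_{x\to\infty}\frac1\theta\int_x^{x+\theta}f(t)\,dt$ and $\overline{R}(f)=\limsup_{x\to\infty}e^{-x}\int_0^xf(t)e^t\,dt$. *)

(* Defs.v *)
From HB Require Import structures.
From mathcomp Require Import all_boot all_order all_algebra.
From mathcomp Require Import all_classical all_reals all_analysis.
Set Implicit Arguments. Unset Strict Implicit. Unset Printing Implicit Defensive.
Import Order.TTheory GRing.Theory Num.Theory.
Import numFieldNormedType.Exports.
Local Open Scope classical_set_scope.
Local Open Scope ring_scope.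
Local Open Scope ereal_scope.

Definition Linfty_Rplus (R : realType) (f : R -> R) : Prop :=
  measurable_fun (`[0%R, +oo[%classic : set R) f /\
  exists M : R, {ae (@lebesgue_measure R), forall t : R,
     `[0%R, +oo[%classic t -> (`|f t| <= M)%R}.

Definition limsup_pinfty (R : realType) (g : R -> \bar R) : \bar R :=
  ereal_inf [set ereal_sup [set g x | x in `[a, +oo[%classic] | a in [set: R]].

Definition window_mean (R : realType) (f : R -> R) (theta x : R) : \bar R :=
  (theta^-1)%:E * \int[@lebesgue_measure R]_(t in `[x, (x + theta)%R]%classic) (f t)%:E.

Definition M1_upper (R : realType) (f : R -> R) : \bar R :=
  lim ((fun theta : R => limsup_pinfty (window_mean f theta)) @ +oo%R).

Definition R_upper (R : realType) (f : R -> R) : \bar R :=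
  limsup_pinfty (fun x : R =>
    (expR (- x))%:E *
      \int[@lebesgue_measure R]_(t in `[0%R, x]%classic) (f t * expR t)%:E).

(* Main.v *)
Require Import Defs.
From mathcomp Require Import all_boot all_order all_algebra.
From mathcomp Require Import all_classical all_reals all_analysis.
From mathcomp Require Import ring lra.
Set Implicit Arguments. Unset Strict Implicit. Unset Printing Implicit Defensive.
Import Order.TTheory GRing.Theory Num.Theory.
Import numFieldNormedType.Exports.
Local Open Scope classical_set_scope.
Local Open Scope ring_scope.

Section P.
Variable R : realType.
Notation mu := (@lebesgue_measure R).

Lemma mu_itv (a b : R) : a <= b -> mu `[a, b]%classic = (b - a)%:E.
Proof.
move=> ab; rewrite lebesgue_measure_itv /= lte_fin.
case: ifPn => H; first by rewrite EFinB.
move: H; rewrite -leNgt => H.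
have -> : b = a by apply/le_anti; rewrite H ab.
by rewrite subrr.
Qed.

Lemma int_gen (phi : R -> R) (a b K : R) : 0 <= a -> a <= b -> 0 <= K ->
  measurable_fun (`[0%R, +oo[%classic : set R) phi ->
  {ae mu, forall t, `[a, b]%classic t -> `|phi t| <= K} ->
  mu.-integrable `[a, b] (EFin \o phi) /\
  `|\int[mu]_(t in `[a, b]) phi t| <= K * (b - a).
Proof.
move=> a0 ab K0 mphi0 hae.
have sub : `[a, b]%classic `<=` (`[0%R, +oo[%classic : set R).
  by move=> t /=; rewrite !in_itv /= => /andP[ta _]; rewrite (le_trans a0 ta).
have mab : measurable `[a, b] by exact: measurable_itv.
have mphi : measurable_fun `[a, b] phi.
  exact: measurable_funS (measurable_itv _) sub mphi0.
have hb : (\int[mu]_(x in `[a, b]) `|(EFin \o phi) x| <= (K * (b - a))%:E)%E.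
  apply: le_trans (@integral_le_bound _ _ _ mu _ _ K%:E mab _ _ _) _.
  - exact/measurable_realfun.measurable_EFinP.
  - by rewrite lee_fin.
  - apply: (filterS (F := almost_everywhere mu) (Filter := ae_filter_ringOfSetsType mu)) hae => t H Dt.
    by have := H Dt; rewrite -lee_fin.
  rewrite [X in (_ * X)%E](_ : _ = (b - a)%:E); last exact: mu_itv ab.
  by rewrite -EFinM.
have intp : mu.-integrable `[a, b] (EFin \o phi).
  by apply/integrableP; split; [exact/measurable_realfun.measurable_EFinP | exact: le_lt_trans hb (ltry _)].
split => //.
apply: le_trans (le_normr_Rintegral _ _) _ => //.
rewrite /Rintegral.
have h0 : (0 <= \int[mu]_(x in `[a, b]) (`|phi x|)%:E)%E.
  by apply: integral_ge0 => t _; rewrite lee_fin.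
have hb' : (\int[mu]_(x in `[a, b]) (`|phi x|)%:E <= (K * (b - a))%:E)%E.
  exact: hb.
rewrite -lee_fin fineK //.
by rewrite ge0_fin_numE // (le_lt_trans hb' (ltry _)).
Qed.

Lemma int_add (phi : R -> R) (a b c : R) : a <= b -> b <= c ->
  mu.-integrable `[a, c] (EFin \o phi) ->
  \int[mu]_(t in `[a, c]) phi t =
  \int[mu]_(t in `[a, b]) phi t + \int[mu]_(t in `[b, c]) phi t.
Proof.
move=> ab bc ip.
have := @Rintegral_itvB R phi (BLeft a) (BRight c) b ip.
rewrite !bnd_simp => /(_ ab bc) E.
rewrite -(@Rintegral_itv_obnd_cbnd R b (BRight c) phi); last first.
  by apply: integrableS ip => //; apply: subset_itvr; rewrite bnd_simp.
by rewrite -E addrC subrK.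
Qed.


Local Notation S h x := (ereal_sup [set h t | t in (`[x, +oo[%classic : set R)]).

Lemma S_mono (h : R -> \bar R) (u v : R) : u <= v -> (S h v <= S h u)%E.
Proof.
move=> uv; apply: ereal_sup_le => _ [t tv <-]; exists t => //.
by move: tv => /=; rewrite !in_itv /= !andbT => vt; exact: le_trans vt.
Qed.

Lemma LS_le (h h' : R -> \bar R) (c : R) :
  (forall x, 0 <= x -> (h x <= S h' x + c%:E)%E) ->
  (limsup_pinfty h <= limsup_pinfty h' + c%:E)%E.
Proof.
move=> H; rewrite -leeBlDr //.
apply: le_ereal_inf_tmp => _ [a _ <-].
set a' := Num.max a 0.
have a'0 : 0 <= a' by rewrite le_max lexx orbT.
have aa' : a <= a' by rewrite le_max lexx.
rewrite leeBlDr //.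
apply: (@le_trans _ _ (S h a')).
  by apply: ereal_inf_lbound; exists a'.
apply: (@le_trans _ _ (S h' a' + c%:E)%E); last by rewrite leeD2r // S_mono.
apply: ge_ereal_sup => _ [x xa <-].
have xa' : a' <= x by move: xa => /=; rewrite in_itv /= andbT.
apply: le_trans (H x (le_trans a'0 xa')) _.
by rewrite leeD2r // S_mono.
Qed.

Lemma LS_bd (h : R -> \bar R) (lo hi : R) :
  (forall x, 0 <= x -> (lo%:E <= h x <= hi%:E)%E) ->
  (lo%:E <= limsup_pinfty h)%E /\ (limsup_pinfty h <= hi%:E)%E.
Proof.
move=> H; split.
  apply: le_ereal_inf_tmp => _ [a _ <-].
  set a' := Num.max a 0.
  have a'0 : 0 <= a' by rewrite le_max lexx orbT.
  have aa' : a <= a' by rewrite le_max lexx.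
  apply: le_ereal_sup_tmp; exists (h a').
    by exists a' => //=; rewrite in_itv /= aa'.
  by case/andP: (H _ a'0).
apply: ge_ereal_inf; exists (S h 0); first by exists 0.
apply: ge_ereal_sup => _ [x x0 <-].
have x0' : 0 <= x by move: x0 => /=; rewrite in_itv /= andbT.
by case/andP: (H _ x0').
Qed.

Lemma S_fin (h : R -> \bar R) (x lo hi : R) :
  (forall t, x <= t -> (lo%:E <= h t <= hi%:E)%E) ->
  exists r : R, [/\ S h x = r%:E, lo <= r &
     forall t, x <= t -> (h t <= r%:E)%E].
Proof.
move=> H.
have l : (lo%:E <= S h x)%E.
  apply: le_ereal_sup_tmp; exists (h x); first by exists x => //=; rewrite in_itv /= lexx.
  by case/andP: (H _ (lexx x)).
have u : (S h x <= hi%:E)%E.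
  apply: ge_ereal_sup => _ [t tx <-].
  have tx' : x <= t by move: tx => /=; rewrite in_itv /= andbT.
  by case/andP: (H _ tx').
move: l u; case E: (S h x) => [r| |] //= l u.
exists r; split => //.
move=> t tx; rewrite -E; apply: ereal_sup_ubound; exists t => //=.
by rewrite in_itv /= tx.
Qed.


Section F.
Variable f : R -> R.
Variable M : R.
Hypothesis M0 : 0 <= M.
Hypothesis mf : measurable_fun (`[0%R, +oo[%classic : set R) f.
Hypothesis fM : {ae mu, forall t, (`[0%R, +oo[%classic : set R) t -> `|f t| <= M}.

Lemma ae_w (w : R -> R) (a b K : R) : 0 <= a ->
  (forall t, `[a, b]%classic t -> `|w t| <= K) ->
  {ae mu, forall t, `[a, b]%classic t -> `|f t * w t| <= M * K}.
Proof.
move=> a0 wK.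
apply: (filterS (F := almost_everywhere mu) (Filter := ae_filter_ringOfSetsType mu)) fM.
move=> t H Dt.
have t0 : (`[0%R, +oo[%classic : set R) t.
  by move: Dt => /=; rewrite !in_itv /= => /andP[ta _]; rewrite (le_trans a0 ta).
rewrite normrM; apply: ler_pM => //; [exact: H | exact: wK].
Qed.

Lemma mexpR0 : measurable_fun (`[0%R, +oo[%classic : set R) (@expR R).
Proof. exact: measurable_funS (@measurable_realfun.measurable_expR R). Qed.

Definition I a b := \int[mu]_(t in `[a, b]) f t.
Definition phie t := f t * expR t.
Definition P x := \int[mu]_(t in `[0, x]) phie t.
Definition g x := expR (- x) * P x.

Lemma I_int a b : 0 <= a -> a <= b ->
  mu.-integrable `[a, b] (EFin \o f) /\ `|I a b| <= M * (b - a).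
Proof.
move=> a0 ab; apply: int_gen => //.
have := @ae_w (fun=> 1) a b 1 a0; rewrite normr1 lexx mulr1 => /(_ (fun _ _ => isT)).
by apply: (filterS (F := almost_everywhere mu) (Filter := ae_filter_ringOfSetsType mu)) => t; rewrite mulr1.
Qed.

Lemma phie_int a b : 0 <= a -> a <= b ->
  mu.-integrable `[a, b] (EFin \o phie) /\
  `|\int[mu]_(t in `[a, b]) phie t| <= M * expR b * (b - a).
Proof.
move=> a0 ab; apply: int_gen => //.
- by rewrite mulr_ge0 // expR_ge0.
- exact: measurable_realfun.measurable_funM mf mexpR0.
apply: ae_w => // t /=; rewrite in_itv /= => /andP[_ tb].
by rewrite ger0_norm ?expR_ge0 // ler_expR.
Qed.

Definition phic c t := f t * (expR c - expR t).

Lemma phic_int y d : 0 <= y -> 0 <= d ->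
  mu.-integrable `[y, y + d] (EFin \o phic (y + d)) /\
  `|\int[mu]_(t in `[y, y + d]) phic (y + d) t| <= M * (expR (y + d) * d) * d.
Proof.
move=> y0 d0.
have -> : M * (expR (y + d) * d) * d = M * (expR (y + d) * d) * (y + d - y) by congr (_ * _); lra.
apply: int_gen => //.
- by rewrite lerDl.
- by rewrite !mulr_ge0 // expR_ge0.
- apply: measurable_realfun.measurable_funM mf _; apply: (measurable_realfun.measurable_funB (f := fun=> expR (y + d))) => //; exact: mexpR0.
apply: ae_w => // t /=; rewrite in_itv /= => /andP[yt tb].
have e1 := expR_ge1Dx (t - (y + d)).
have e2 : expR t = expR (y + d) * expR (t - (y + d)) by rewrite -expRD; congr expR; lra.
have ep := expR_gt0 (y + d).
rewrite ger0_norm; last by rewrite subr_ge0 ler_expR.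
rewrite e2; nra.
Qed.


Lemma P_add y c : 0 <= y -> y <= c ->
  P c = P y + \int[mu]_(t in `[y, c]) phie t.
Proof.
move=> y0 yc; rewrite /P; apply: int_add => //.
by case: (phie_int (lexx 0) (le_trans y0 yc)).
Qed.

Lemma phic_eq y d : 0 <= y -> 0 <= d ->
  \int[mu]_(t in `[y, y + d]) phic (y + d) t =
  expR (y + d) * I y (y + d) - \int[mu]_(t in `[y, y + d]) phie t.
Proof.
move=> y0 d0.
have yd : y <= y + d by rewrite lerDl.
have [ic _] := phic_int y0 d0.
have [ie _] := phie_int y0 yd.
have [iI _] := I_int y0 yd.
have : \int[mu]_(t in `[y, y + d]) (phic (y + d) t + phie t) =
  \int[mu]_(t in `[y, y + d]) phic (y + d) t + \int[mu]_(t in `[y, y + d]) phie t.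
  exact: RintegralD.
rewrite (@eq_Rintegral _ _ _ mu _ (fun t => expR (y + d) * f t)); last first.
  by move=> t _; rewrite /phic /phie; ring.
rewrite RintegralZl // => E.
rewrite /I E; ring.
Qed.

Lemma expR_split (y d : R) : expR (- (y + d)) = expR (- d) * expR (- y).
Proof. by rewrite -expRD; congr expR; ring. Qed.

Lemma expR_inv1 (x : R) : expR (- x) * expR x = 1.
Proof. by rewrite -expRD addNr expR0. Qed.

Lemma step_eq y d : 0 <= y -> 0 <= d ->
  I y (y + d) = g (y + d) - expR (- d) * g y +
    expR (- (y + d)) * \int[mu]_(t in `[y, y + d]) phic (y + d) t.
Proof.
move=> y0 d0.
have yd : y <= y + d by rewrite lerDl.
rewrite phic_eq // /g (P_add y0 yd).
have h1 := expR_inv1 (y + d).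
rewrite expR_split in h1 *.
rewrite -{1}(mul1r (I y (y + d))) -h1.
ring.
Qed.

Lemma gstep y d : 0 <= y -> 0 <= d ->
  `|g (y + d) - expR (- d) * g y| <= M * d.
Proof.
move=> y0 d0.
have yd : y <= y + d by rewrite lerDl.
rewrite /g (P_add y0 yd) expR_split.
have [_ hb] := phie_int y0 yd.
have h1 := expR_inv1 (y + d).
have -> : expR (- d) * expR (- y) * (P y + \int[mu]_(t in `[y, y + d]) phie t) -
   expR (- d) * (expR (- y) * P y) =
   expR (- (y + d)) * \int[mu]_(t in `[y, y + d]) phie t.
  by rewrite expR_split; ring.
rewrite normrM ger0_norm ?expR_ge0 //.
have ep := expR_gt0 (- (y + d)).
have -> : M * d = expR (- (y + d)) * (M * expR (y + d) * (y + d - y)).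
  transitivity (M * d * (expR (- (y + d)) * expR (y + d))); first by rewrite h1 mulr1.
  ring.
by apply: ler_wpM2l => //; exact: expR_ge0.
Qed.


Lemma g0 : g 0 = 0.
Proof.
have [_ hb] := phie_int (lexx 0) (lexx 0).
rewrite subrr mulr0 normr_le0 in hb.
by rewrite /g /P (eqP hb) mulr0.
Qed.

Lemma g_small y : 0 <= y -> y <= 1 -> `|g y| <= 2 * M.
Proof.
move=> y0 y1; have := gstep (lexx 0) y0.
rewrite add0r g0 mulr0 subr0 => h.
have M0' := M0.
have := ler_wpM2l M0 y1; rewrite mulr1 => k.
lra.
Qed.

Lemma expRm_le (d : R) : 0 <= d -> 1 - d <= expR (- d) <= 1 - d + d ^+ 2.
Proof.
move=> d0; have e1 := expR_ge1Dx (- d).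
have e2 := expR_ge1Dx d.
have h1 := expR_inv1 d.
have up := expR_gt0 (- d).
apply/andP; split; first lra.
have k : 1 <= expR d * (1 - d + d ^+ 2) by nra.
nra.
Qed.

Lemma g_bd y : 0 <= y -> `|g y| <= 2 * M.
Proof.
suff H : forall n : nat, forall y, 0 <= y -> y <= n%:R -> `|g y| <= 2 * M.
  move=> y0; apply: (H (Num.trunc y).+1) => //.
  by have /andP[_ /ltW] := truncn_itv y0.
have M0' := M0.
elim => [|n IH] {}y y0 yn.
  by apply: g_small => //; apply: le_trans yn _.
have [y1|y1] := lerP y 1; first exact: g_small.
have y'0 : 0 <= y - 1 by lra.
have y'n : y - 1 <= n%:R by move: yn; rewrite -natr1; lra.
have := IH _ y'0 y'n.
have := gstep y'0 ler01.
rewrite subrK mulr1 => h1 h2.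
have [_] := andP (expRm_le ler01).
have up := expR_gt0 (- 1 : R).
move=> u1.
have hu : `|expR (-1) * g (y - 1)| <= expR (-1) * (2 * M).
  by rewrite normrM ger0_norm ?expR_ge0 // ler_wpM2l // expR_ge0.
have e2 := expR_ge1Dx (1 : R).
have hi := expR_inv1 (1 : R).
have uh : expR (-1) <= 1 / 2 :> R by nra.
have t := ler_normD (g y - expR (-1) * g (y - 1)) (expR (-1) * g (y - 1)).
rewrite subrK in t.
nra.
Qed.

Lemma step_le y d s : 0 <= y -> 0 <= d -> g y <= s ->
  I y (y + d) <= g (y + d) - g y + d * s + 3 * M * d ^+ 2.
Proof.
move=> y0 d0 gs.
have M0' := M0.
rewrite step_eq //.
have [_ hC] := phic_int y0 d0.
have h1 := expR_inv1 (y + d).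
have ep := expR_gt0 (- (y + d)).
set C := Rintegral _ _ _ in hC *.
have hC' : expR (- (y + d)) * C <= M * d ^+ 2.
  have := ler_norm C => hc.
  have : expR (- (y + d)) * C <= expR (- (y + d)) * (M * (expR (y + d) * d) * d).
    by apply: ler_wpM2l; [exact: ltW | exact: le_trans hc hC].
  move=> k; apply: (le_trans k).
  have E : expR (- (y + d)) * (M * (expR (y + d) * d) * d) = M * d ^+ 2.
    transitivity (M * d ^+ 2 * (expR (- (y + d)) * expR (y + d))); first ring.
    by rewrite h1 mulr1.
  by rewrite E.
have gb := g_bd y0.
have [u1 u2] := andP (expRm_le d0).
set u := expR (- d) in u1 u2 *.
set G := g y in gb gs *.
have hG : - (2 * M) <= G <= 2 * M by rewrite -ler_norml.
case/andP: hG => hG1 hG2.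
set v := u - 1 + d.
have v0 : 0 <= v by rewrite /v; lra.
have v1 : v <= d ^+ 2 by rewrite /v; lra.
have k1 : 0 <= d * (s - G) by apply: mulr_ge0 => //; lra.
have k2 : 0 <= v * (2 * M + G) by apply: mulr_ge0 => //; lra.
have k3 : 0 <= (d ^+ 2 - v) * (2 * M) by apply: mulr_ge0; lra.
have -> : u = v + 1 - d by rewrite /v; ring.
nra.
Qed.


Lemma I0 x : 0 <= x -> I x x = 0.
Proof.
move=> x0; have [_ h] := I_int x0 (lexx x).
by move: h; rewrite subrr mulr0 normr_le0 => /eqP.
Qed.

Lemma I_split x y z : 0 <= x -> x <= y -> y <= z -> I x z = I x y + I y z.
Proof.
move=> x0 xy yz; have [ip _] := I_int x0 (le_trans xy yz).
exact: int_add.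
Qed.

Lemma tele x d s : 0 <= x -> 0 <= d -> (forall t, x <= t -> g t <= s) ->
  forall k : nat, I x (x + k%:R * d) <=
    g (x + k%:R * d) - g x + k%:R * d * s + 3 * M * k%:R * d ^+ 2.
Proof.
move=> x0 d0 gs; elim => [|k IH].
  by rewrite mulr0n !mul0r !mulr0 addr0 I0 // subrr !addr0 mul0r.
have yx : x <= x + k%:R * d by rewrite lerDl mulr_ge0.
have y0 : 0 <= x + k%:R * d by exact: le_trans yx.
have -> : x + k.+1%:R * d = (x + k%:R * d) + d by rewrite -natr1; ring.
rewrite (I_split x0 yx) ?lerDl //.
have := step_le y0 d0 (gs _ yx).
rewrite (_ : k.+1%:R = k%:R + 1 :> R); last by rewrite natr1.
have M0' := M0.
move: IH; set a := I x _; set b := I _ _ ; move=> IH st.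
have -> : 3 * M * (k%:R + 1) * d ^+ 2 = 3 * M * k%:R * d ^+ 2 + 3 * M * d ^+ 2 by ring.
have -> : (k%:R + 1) * d * s = k%:R * d * s + d * s by ring.
lra.
Qed.

Lemma wm_real th (n : nat) x s : 0 < th -> (0 < n)%N -> 0 <= x ->
  (forall t, x <= t -> g t <= s) ->
  I x (x + th) <= th * s + 4 * M + 3 * M * th * (th / n%:R).
Proof.
move=> th0 n0 x0 gs.
have nR : 0 < n%:R :> R by rewrite ltr0n.
have d0 : 0 <= th / n%:R by rewrite divr_ge0 // ltW.
have hn : n%:R * (th / n%:R) = th by field; rewrite gt_eqF.
have := tele x0 d0 gs n.
rewrite hn.
have e : 3 * M * n%:R * (th / n%:R) ^+ 2 = 3 * M * th * (th / n%:R).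
  by rewrite -hn; field; rewrite gt_eqF.
rewrite e.
have g1 := g_bd x0.
have g2' : `|g (x + th)| <= 2 * M by apply: g_bd; rewrite addr_ge0 // ltW.
have M0' := M0.
move: g1 g2' => /ler_normlP [g1 g1'] /ler_normlP [g2 g2'].
lra.
Qed.

Lemma fek th sg x s : 0 < s -> 0 < th -> 0 <= x -> - M <= sg ->
  (forall y, x <= y -> I y (y + s) <= s * sg) ->
  I x (x + th) <= th * sg + 2 * M * s.
Proof.
move=> s0 th0 x0 sgM hI.
have M0' := M0.
have tk : forall k : nat, I x (x + k%:R * s) <= k%:R * s * sg.
  elim => [|k IH]; first by rewrite mulr0n !mul0r addr0 I0.
  have yx : x <= x + k%:R * s by rewrite lerDl mulr_ge0 // ltW.
  have -> : x + k.+1%:R * s = (x + k%:R * s) + s by rewrite -natr1; ring.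
  rewrite (I_split x0 yx); last by rewrite lerDl ltW.
  have := hI _ yx.
  rewrite (_ : k.+1%:R = k%:R + 1 :> R); last by rewrite natr1.
  rewrite (_ : (k%:R + 1) * s * sg = k%:R * s * sg + s * sg); last by ring.
  lra.
have q0 : 0 <= th / s by rewrite divr_ge0 // ltW.
have /andP[n1 n2] := truncn_itv q0.
set n := Num.trunc (th / s) in n1 n2.
rewrite ler_pdivlMr // in n1.
rewrite ltr_pdivrMr // -natr1 in n2.
have yx : x <= x + n%:R * s by rewrite lerDl mulr_ge0 // ltW.
have yz : x + n%:R * s <= x + th by rewrite lerD2l.
rewrite (I_split x0 yx yz).
have := tk n.
have [_ hb] := I_int (le_trans x0 yx) yz.
move: hb => /ler_normlP [_ hb].
have k1 : 0 <= (th - n%:R * s) * (sg + M) by apply: mulr_ge0; lra.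
have k2 : 0 <= M * (s - (th - n%:R * s)) by apply: mulr_ge0; lra.
move: hb; rewrite (_ : x + th - (x + n%:R * s) = th - n%:R * s); last ring.
nra.
Qed.


Lemma bd_fin (z : \bar R) (lo hi : R) :
  (lo%:E <= z)%E -> (z <= hi%:E)%E -> z = (fine z)%:E.
Proof. by case: z. Qed.

Lemma wm_eq th x : 0 <= x -> 0 <= th ->
  window_mean f th x = (th^-1 * I x (x + th))%:E.
Proof.
move=> x0 th0; rewrite /window_mean /I /Rintegral EFinM fineK //.
have xth : x <= x + th by rewrite lerDl.
have [ip _] := I_int x0 xth.
have mab : measurable `[x, x + th]%classic by exact: measurable_itv.
have := @integrable_fin_num _ _ _ mu _ mab _ ip.
by [].
Qed.

Lemma Rfun_eq x : 0 <= x ->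
  ((expR (- x))%:E * \int[mu]_(t in `[0%R, x]%classic) (f t * expR t)%:E)%E = (g x)%:E.
Proof.
move=> x0; rewrite /g /P /Rintegral EFinM fineK //.
have [ip _] := phie_int (lexx 0) x0.
have mab : measurable `[0, x]%classic by exact: measurable_itv.
have := @integrable_fin_num _ _ _ mu _ mab _ ip.
by [].
Qed.

Lemma wm_bd th x : 0 < th -> 0 <= x ->
  ((- M)%:E <= window_mean f th x <= M%:E)%E.
Proof.
move=> th0 x0; rewrite wm_eq //; last exact: ltW.
rewrite !lee_fin -ler_norml.
have xth : x <= x + th by rewrite lerDl ltW.
have [_ hb] := I_int x0 xth.
move: hb; rewrite (_ : x + th - x = th); last ring.
move=> h; rewrite normrM ger0_norm; last by rewrite invr_ge0 ltW.
by rewrite ler_pdivrMl // mulrC.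
Qed.

Lemma H_bd th : 0 < th ->
  ((- M)%:E <= limsup_pinfty (window_mean f th))%E /\
  (limsup_pinfty (window_mean f th) <= M%:E)%E.
Proof. by move=> th0; apply: LS_bd => x x0; exact: wm_bd. Qed.

Lemma H_main th (n : nat) : 0 < th -> (0 < n)%N ->
  (limsup_pinfty (window_mean f th) <=
   R_upper f + (4 * M / th + 3 * M * (th / n%:R))%:E)%E.
Proof.
move=> th0 n0; rewrite /R_upper; apply: LS_le => x x0.
have M0' := M0.
have hb : forall t, x <= t -> ((- (2 * M))%:E <=
    (expR (- t))%:E * \int[mu]_(u in `[0%R, t]%classic) (f u * expR u)%:E <= (2 * M)%:E)%E.
  move=> t xt; have t0 := le_trans x0 xt.
  by rewrite Rfun_eq // !lee_fin -ler_norml g_bd.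
have [r [Er _ hr]] := @S_fin (fun x : R =>
    ((expR (- x))%:E * \int[mu]_(t in `[0%R, x]%classic) (f t * expR t)%:E)%E)
    x (- (2 * M)) (2 * M) hb.
rewrite Er -EFinD wm_eq //; last exact: ltW.
rewrite lee_fin.
have gs : forall t, x <= t -> g t <= r.
  by move=> t xt; have := hr t xt; rewrite Rfun_eq ?(le_trans x0 xt) // lee_fin.
have h := wm_real th0 n0 x0 gs.
rewrite ler_pdivrMl //.
have -> : th * (r + (4 * M / th + 3 * M * (th / n%:R))) =
   th * r + 4 * M + 3 * M * th * (th / n%:R).
  by field; rewrite !gt_eqF // ltr0n.
exact: h.
Qed.

Lemma H_fek s th : 0 < s -> 0 < th ->
  (limsup_pinfty (window_mean f th) <=
   limsup_pinfty (window_mean f s) + (2 * M * s / th)%:E)%E.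
Proof.
move=> s0 th0; apply: LS_le => x x0.
have M0' := M0.
have [r [Er rlo hr]] := @S_fin (window_mean f s) x (- M) M
  (fun t xt => wm_bd s0 (le_trans x0 xt)).
rewrite Er -EFinD wm_eq //; last exact: ltW.
rewrite lee_fin.
have hI : forall y, x <= y -> I y (y + s) <= s * r.
  move=> y xy; have := hr y xy; rewrite wm_eq; [|exact: le_trans x0 xy|exact: ltW].
  rewrite lee_fin.
  by rewrite ler_pdivrMl.
have := fek s0 th0 x0 rlo hI => h.
rewrite ler_pdivrMl //.
have -> : th * (r + 2 * M * s / th) = th * r + 2 * M * s.
  by field; rewrite gt_eqF.
exact: h.
Qed.


Lemma main_F : (M1_upper f <= R_upper f)%E.
Proof.
have M0' := M0.
set H := fun th => limsup_pinfty (window_mean f th).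
set L := ereal_inf [set H s | s in (`]0%R, +oo[%classic : set R)].
have Ll : ((- M)%:E <= L)%E.
  apply: le_ereal_inf_tmp => _ [s s0 <-].
  have s0' : 0 < s by move: s0 => /=; rewrite in_itv /= andbT.
  by case: (H_bd s0').
have Lu : (L <= M%:E)%E.
  apply: ge_ereal_inf; exists (H 1); first by exists 1 => //=; rewrite in_itv /= ltr01.
  by case: (H_bd ltr01).
have EL := bd_fin Ll Lu.
set l := fine L in EL.
have Hl : forall th, 0 < th -> (L <= H th)%E.
  by move=> th th0; apply: ereal_inf_lbound; exists th => //=; rewrite in_itv /= th0.
have cv : H x @[x --> +oo] --> l%:E.
  apply/fine_cvgP; split.
    exists 0; split; first exact: real0.
    move=> th th0 /=; have [a b] := H_bd th0; rewrite /H (bd_fin a b) //.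
  apply/cvgrPdist_lt => e e0.
  have : (L < (l + e / 2)%:E)%E.
    by rewrite EL lte_fin ltrDl divr_gt0.
  move/ereal_inf_lt => [_ [s s0 <-] Hs].
  have s0' : 0 < s by move: s0 => /=; rewrite in_itv /= andbT.
  exists (4 * M * s / e); split; first exact: num_real.
  move=> th Kth.
  have K0 : 0 <= 4 * M * s / e by rewrite divr_ge0 ?mulr_ge0 // ltW.
  have th0 : 0 < th by exact: le_lt_trans K0 Kth.
  have [a1 b1] := H_bd th0; have [a2 b2] := H_bd s0'.
  have E1 := bd_fin a1 b1; have E2 := bd_fin a2 b2.
  have k1 := Hl th th0; rewrite /H EL E1 lee_fin in k1.
  have k2 := H_fek s0' th0.
  rewrite E1 E2 -EFinD lee_fin in k2.
  rewrite /H E2 lte_fin in Hs.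
  have k3 : 2 * M * s / th < e / 2.
    rewrite ltr_pdivrMr //.
    move: Kth; rewrite ltr_pdivrMr // => Kth.
    rewrite (_ : e / 2 * th = (th * e) / 2); last by ring.
    rewrite ltr_pdivlMr //.
    by rewrite (_ : 2 * M * s * 2 = 4 * M * s); last ring.
  rewrite /= ltr_norml.
  set A := fine (limsup_pinfty (window_mean f th)) in k1 k2 *.
  set B := fine (limsup_pinfty (window_mean f s)) in k2 Hs.
  set q := 2 * M * s / th in k2 k3.
  clearbody A B q.
  apply/andP; split; clear -k1 k2 Hs k3 e0; lra.
have M1E : M1_upper f = l%:E by rewrite /M1_upper; exact: (cvg_lim (@ereal_hausdorff R) cv).
rewrite M1E -EL.
apply/lee_addgt0Pr => e e0.
set th := 8 * M / e + 1.
have th0 : 0 < th by rewrite /th ltr_pwDr // divr_ge0 ?mulr_ge0 // ltW.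
set n := (Num.trunc (6 * M * th / e)).+1.
have n0 : (0 < n)%N by [].
apply: le_trans (Hl th th0) _.
apply: le_trans (H_main th0 n0) _.
apply: leeD => //; rewrite lee_fin.
have c1 : 4 * M / th <= e / 2.
  rewrite ler_pdivrMr //.
  have -> : e / 2 * th = 4 * M + e / 2 by rewrite /th; field; rewrite gt_eqF.
  by rewrite lerDl divr_ge0 // ltW.
have nR : 0 < n%:R :> R by rewrite ltr0n.
have c2 : 3 * M * (th / n%:R) <= e / 2.
  have := truncnS_gt (6 * M * th / e); rewrite -/n ltr_pdivrMr // => hn.
  rewrite mulrA ler_pdivrMr //.
  rewrite (_ : e / 2 * n%:R = (n%:R * e) / 2); last by ring.
  rewrite ler_pdivlMr //.
  rewrite (_ : 3 * M * th * 2 = 6 * M * th); last by ring.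
  exact: ltW.
set a := 4 * M / th in c1 *.
set b := 3 * M * (th / n%:R) in c2 *.
clearbody a b.
by rewrite [e]splitr lerD.
Qed.

End F.
End P.

Local Open Scope ereal_scope.

Theorem theorem3p5 (R : realType) (f : R -> R) :
  Linfty_Rplus f -> M1_upper f <= R_upper f.
Proof.
move=> [mf [M hM]].
have M0 : (0 <= Num.max M 0%R)%R by rewrite le_max lexx orbT.
apply: (@main_F R f (Num.max M 0%R) M0 mf).
apply: (filterS (F := almost_everywhere (@lebesgue_measure R))
  (Filter := ae_filter_ringOfSetsType (@lebesgue_measure R))) hM => t H Dt.
by apply: le_trans (H Dt) _; rewrite le_max lexx.
Qed.
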